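(* Let $\mathbf{X}$ be a real random variable with finite support $\{v_1,\dots,v_\ell\}$, taking value $v_i$ with probability $\alpha_i>0$, and let $\alpha=\min_i\alpha_i$. Let $p,q:\mathbb{R}^k\to\mathbb{R}$ be two functions such that the distributions of $p(\mathbf{X}^{\otimes k})$ and $q(\mathbf{X}^{\otimes k})$ are identical. Then any algorithm which, given access to independent noiseless labeled examples $(\mathbf{x},r(\mathbf{x}))$ with $\mathbf{x}\sim\mathbf{X}^{\otimes n}$, correctly (with high confidence) distinguishes between the two possibilities that $r(x)=p(x_{i_1},\dots,x_{i_k})$ for some $i_1,\dots,i_k\in[n]$, versus $r(x)=q(x_{i_1},\dots,x_{i_k})$ for some $i_1,\dots,i_k\in[n]$, must use $m=\Omega_{k,\ell,\alpha}(\log n)$ samples.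
   Context: $\mathbf{X}^{\otimes n}$ denotes a vector of $n$ i.i.d. copies of $\mathbf{X}$. The quantities $k,\ell,\alpha$ do not depend on $n$. *)

(* Defs.v *)
From HB Require Import structures.
From mathcomp Require Import all_boot all_order all_algebra.
From mathcomp Require Import reals exp.
Set Implicit Arguments. Unset Strict Implicit. Unset Printing Implicit Defensive.
Import Order.TTheory GRing.Theory Num.Theory.
Local Open Scope ring_scope.

(* The random variable X takes value v i with probability a i, i : 'I_l.
   A point of X^{(x)n} is encoded by the vector of value-indices z : 'I_n -> 'I_l,
   whose actual real value is (fun t => v (z t)). *)

Definition law (R : realType) (l k : nat) (v : 'I_l -> R) (a : 'I_l -> R)
  (f : ('I_k -> R) -> R) (y : R) : R :=
  \sum_(z : {ffun 'I_k -> 'I_l} | f (fun t => v (z t)) == y) \prod_(t < k) a (z t).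

Definition same_law (R : realType) (l k : nat) (v : 'I_l -> R) (a : 'I_l -> R)
  (p q : ('I_k -> R) -> R) : Prop :=
  forall y : R, law v a p y = law v a q y.

Definition junta (R : realType) (k n : nat) (f : ('I_k -> R) -> R) (I : 'I_k -> 'I_n)
  : ('I_n -> R) -> R := fun x => f (fun t => x (I t)).

(* A (possibly randomized) algorithm using m labeled examples: given the m examples
   (x^(j), r(x^(j))), it outputs "p" with probability A(examples) in [0,1]
   (its internal randomness being independent of the examples). *)
Definition algorithm (R : realType) (n m : nat) :=
  ('I_m -> ('I_n -> R) * R) -> R.

Definition accept_prob (R : realType) (l n m : nat) (v : 'I_l -> R) (a : 'I_l -> R)
  (r : ('I_n -> R) -> R) (A : algorithm R n m) : R :=
  \sum_(s : {ffun 'I_m -> {ffun 'I_n -> 'I_l}})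
     (\prod_(j < m) \prod_(i < n) a (s j i)) *
     A (fun j => ((fun i => v (s j i)), r (fun i => v (s j i)))).

Definition distinguishes (R : realType) (l k n m : nat) (v : 'I_l -> R) (a : 'I_l -> R)
  (p q : ('I_k -> R) -> R) (A : algorithm R n m) : Prop :=
  (forall I : 'I_k -> 'I_n, injective I -> accept_prob v a (junta p I) A >= 2/3) /\
  (forall I : 'I_k -> 'I_n, injective I -> accept_prob v a (junta q I) A <= 1/3).

(* Main.v *)
Require Import Defs.
From HB Require Import structures.
From mathcomp Require Import all_boot all_order all_algebra.
From mathcomp Require Import reals exp.
From mathcomp Require Import boolp ring lra zify.
Import Order.TTheory GRing.Theory Num.Theory.
Local Open Scope ring_scope.
Section Aux.
Variable R : realType.

Lemma sum_prod_ffun2 (I J T : finType) (f : I -> J -> T -> R) :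
  \sum_(s : {ffun I -> {ffun J -> T}}) \prod_i \prod_j f i j (s i j)
  = \prod_i \prod_j \sum_x f i j x.
Proof.
rewrite (eq_bigr (fun i => \sum_(g : {ffun J -> T}) \prod_j f i j (g j))); last first.
  by move=> i _; rewrite bigA_distr_bigA.
by rewrite bigA_distr_bigA.
Qed.

Lemma prod_eq_ffun (I : finType) (T : eqType) (f g : {ffun I -> T}) :
  \prod_i ((f i == g i)%:R : R) = (f == g)%:R.
Proof.
case: (f =P g) => [->|neq].
  by rewrite big1 // => i _; rewrite eqxx.
have : ~~ [forall i, f i == g i].
  apply/negP => /forallP H; apply: neq; apply/ffunP => i; exact/eqP/H.
rewrite negb_forall => /existsP [i Hi].
by rewrite (bigD1 i) //= (negbTE Hi) mul0r.
Qed.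

Variables (l m n : nat) (a : 'I_l -> R).
Hypothesis sa : \sum_i a i = 1.

Definition W (s : {ffun 'I_m -> {ffun 'I_n -> 'I_l}}) := \prod_(j < m) \prod_(i < n) a (s j i).

Lemma marg (K : nat) (I : 'I_K -> 'I_n) (injI : injective I)
  (g : 'I_m -> 'I_K -> 'I_l -> R) :
  \sum_s W s * \prod_j \prod_t g j t (s j (I t))
  = \prod_j \prod_t \sum_x a x * g j t x.
Proof.
pose f j i x := a x * \prod_t (if I t == i then g j t x else 1).
have E1 : forall s, W s * \prod_j \prod_t g j t (s j (I t)) = \prod_j \prod_i f j i (s j i).
  move=> s; rewrite /W -big_split /=; apply: eq_bigr => j _.
  rewrite /f big_split /=; congr (_ * _).
  rewrite exchange_big /=; apply: eq_bigr => t _.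
  rewrite -big_mkcond /=.
  rewrite (eq_bigl (fun i => i == I t)); last by move=> i; rewrite eq_sym.
  by rewrite big_pred1_eq.
rewrite (eq_bigr _ (fun s _ => E1 s)) sum_prod_ffun2; apply: eq_bigr => j _.
rewrite (bigID (fun i => i \in [set I x | x in 'I_K])) /=.
rewrite [X in _ * X]big1 ?mulr1; last first.
  move=> i Hi; rewrite /f -[RHS]sa; apply: eq_bigr => x _.
  rewrite big1 ?mulr1 // => t _; case: eqP => // E.
  by move: Hi; rewrite -E imset_f.
rewrite big_imset /=; last by move=> x y _ _; apply: injI.
apply: eq_bigr => t _; rewrite /f; apply: eq_bigr => x _; congr (_ * _).
rewrite (bigD1 t) //= eqxx big1 ?mulr1 // => t' Ht'.
by rewrite (inj_eq injI) (negbTE Ht').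
Qed.

End Aux.
Section PL.
Variable R : realType.

Lemma grouping (T : finType) (Y : eqType) (S : seq Y) (uS : uniq S) (f : T -> Y)
  (hf : forall x, f x \in S) (phi : T -> R) (H : Y -> R) :
  \sum_x phi x * H (f x) = \sum_(y <- S) H y * \sum_x phi x * (f x == y)%:R.
Proof.
rewrite (eq_bigr (fun y => \sum_x H y * (phi x * (f x == y)%:R))); last first.
  by move=> y _; rewrite mulr_sumr.
rewrite exchange_big /=; apply: eq_bigr => x _.
rewrite (eq_bigr (fun y => if f x == y then phi x * H (f x) else 0)); last first.
  by move=> y _; case: eqP => [->|_]; rewrite ?mulr1 ?mulr0 // mulrC.
rewrite -big_mkcond /= -big_filter.
rewrite (eq_filter (a2 := pred1 (f x))); last by move=> y; rewrite /= eq_sym.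
by rewrite filter_pred1_uniq // big_seq1.
Qed.

Variables (l k m : nat) (v : 'I_l -> R) (a : 'I_l -> R).

Definition wM (M : {ffun 'I_m -> {ffun 'I_k -> 'I_l}}) := \prod_j \prod_t a (M j t).
Definition Fv (p : ('I_k -> R) -> R) (M : {ffun 'I_m -> {ffun 'I_k -> 'I_l}}) : {ffun 'I_m -> R} :=
  [ffun j => p (fun t => v (M j t))].

Lemma law_fact p (y : {ffun 'I_m -> R}) :
  \sum_M wM M * (Fv p M == y)%:R = \prod_j law v a p (y j).
Proof.
rewrite (eq_bigr (fun M : {ffun 'I_m -> {ffun 'I_k -> 'I_l}} => \prod_j ((\prod_t a (M j t)) * (p (fun t => v (M j t)) == y j)%:R))); last first.
  move=> M _; rewrite -prod_eq_ffun /wM -big_split /=; apply: eq_bigr => j _.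
  by rewrite ffunE.
rewrite -(bigA_distr_bigA (fun j (z : {ffun 'I_k -> 'I_l}) => (\prod_t a (z t)) * (p (fun t => v (z t)) == y j)%:R)).
rewrite [LHS](_ : _ = \prod_j \sum_(z : {ffun 'I_k -> 'I_l}) (\prod_t a (z t) * (p (fun t => v (z t)) == y j)%:R)) //.
apply: eq_bigr => j _; rewrite /law [RHS]big_mkcond /=; apply: eq_bigr => z _.
by case: ifP; rewrite ?mulr1 ?mulr0.
Qed.

Lemma pushforward p q : same_law v a p q -> forall H : {ffun 'I_m -> R} -> R,
  \sum_M wM M * H (Fv p M) = \sum_M wM M * H (Fv q M).
Proof.
move=> sl H.
pose S := undup ([seq Fv p M | M <- enum {ffun 'I_m -> {ffun 'I_k -> 'I_l}}] ++
                 [seq Fv q M | M <- enum {ffun 'I_m -> {ffun 'I_k -> 'I_l}}]).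
have uS : uniq S by apply: undup_uniq.
rewrite (@grouping _ _ S uS (Fv p)); last first.
  by move=> M; rewrite mem_undup mem_cat map_f ?mem_enum.
rewrite (@grouping _ _ S uS (Fv q)); last first.
  by move=> M; rewrite mem_undup mem_cat orbC map_f ?mem_enum.
apply: eq_bigr => y _; rewrite !law_fact; congr (_ * _).
by apply: eq_bigr => j _; rewrite sl.
Qed.
End PL.
Lemma ib_proof n k (b : 'I_(n %/ k.+1)) (t : 'I_k) : (b * k.+1 + t < n)%N.
Proof.
have h1 := ltn_ord b; have h2 := ltn_ord t; have h3 := leq_trunc_div n k.+1.
have h4 : (b.+1 * k.+1 <= n %/ k.+1 * k.+1)%N by apply: leq_mul.
lia.
Qed.

Definition Ib n k (b : 'I_(n %/ k.+1)) (t : 'I_k) : 'I_n := Ordinal (@ib_proof n k b t).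
Arguments Ib {n k}.

Lemma Ib_inj n k b : injective (@Ib n k b).
Proof. move=> t t' /(congr1 val) /= H; apply: val_inj => /=; lia. Qed.

Lemma Ib_disj n k b b' t t' : b != b' -> @Ib n k b t != @Ib n k b' t'.
Proof.
move=> nb; apply/negP => /eqP /(congr1 val) /= H.
have : ((b * k.+1 + t) %/ k.+1 = (b' * k.+1 + t') %/ k.+1)%N by rewrite H.
rewrite !divnMDl // (divn_small (leqW (ltn_ord t))) (divn_small (leqW (ltn_ord t'))) !addn0.
by move/val_inj => E; rewrite E eqxx in nb.
Qed.

Arguments Ib_inj {n k b}.
Arguments Ib_disj {n k b b'}.

Lemma split_l k (t : 'I_k) : split (lshift k t) = inl t.
Proof. exact: (unsplitK (inl t)). Qed.
Lemma split_r k (t : 'I_k) : split (rshift k t) = inr t.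
Proof. exact: (unsplitK (inr t)). Qed.

Section Main.
Variables (R : realType) (k l n m : nat) (v a : 'I_l -> R) (p q : ('I_k -> R) -> R)
  (A : algorithm R n m).
Hypotheses (apos : forall i, 0 < a i) (sa : \sum_i a i = 1) (sl : same_law v a p q)
  (hA : forall xs, 0 <= A xs <= 1) (hd : distinguishes v a p q A).

Local Notation B := (n %/ k.+1)%N.
Local Notation ST := {ffun 'I_m -> {ffun 'I_n -> 'I_l}}.
Local Notation MT := {ffun 'I_m -> {ffun 'I_k -> 'I_l}}.
Local Notation Ws s := (@W R l m n a s).
Local Notation wm M := (@wM R l k m a M).
Local Notation FV r M := (@Fv R l k m v r M).

Definition Mb (b : 'I_B) (s : ST) : MT := [ffun j => [ffun t => s j (Ib b t)]].
Definition Hs (s : ST) (y : {ffun 'I_m -> R}) : R := A (fun j => ((fun i => v (s j i)), y j)).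
Definition hh s (M : MT) := Hs s (FV p M) - Hs s (FV q M).
Definition ind b s (M : MT) : R := (Mb b s == M)%:R.

Lemma acc_eq (b : 'I_B) r :
  accept_prob v a (junta r (Ib b)) A = \sum_s Ws s * Hs s (FV r (Mb b s)).
Proof.
apply: eq_bigr => s _; congr (_ * _); rewrite /Hs; congr A; apply: funext => j.
rewrite !ffunE; congr pair; congr r; apply: funext => t; by rewrite /Mb !ffunE.
Qed.

Lemma W_ge0 s : 0 <= Ws s.
Proof. by apply: prodr_ge0 => j _; apply: prodr_ge0 => i _; apply: ltW. Qed.

Lemma sumW : \sum_s Ws s = 1.
Proof.
rewrite /W (@sum_prod_ffun2 R _ _ _ (fun _ _ x => a x)).
by rewrite big1 // => j _; rewrite big1 // => i _.
Qed.

Lemma sumwM : \sum_(M : MT) wm M = 1.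
Proof.
rewrite /wM (@sum_prod_ffun2 R _ _ _ (fun _ _ x => a x)).
by rewrite big1 // => j _; rewrite big1 // => i _.
Qed.

Lemma ind_prod b s M : ind b s M = \prod_j \prod_t ((s j (Ib b t) == M j t)%:R).
Proof.
rewrite /ind -prod_eq_ffun; apply: eq_bigr => j _; rewrite /Mb ffunE -prod_eq_ffun.
by apply: eq_bigr => t _; rewrite ffunE.
Qed.

Lemma sum_ind1 (M0 : 'I_l) : \sum_x a x * (x == M0)%:R = a M0.
Proof.
rewrite (bigD1 M0) //= eqxx mulr1 big1 ?addr0 // => x /negbTE ->.
by rewrite mulr0.
Qed.

Lemma E1 b M : \sum_s Ws s * ind b s M = wm M.
Proof.
have := @marg R l m n a sa k (Ib b) (@Ib_inj n k b) (fun j t x => (x == M j t)%:R).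
move=> /= E; rewrite (eq_bigr _ (fun s _ => congr1 (fun z => Ws s * z) (ind_prod b s M))).
rewrite E /wM; apply: eq_bigr => j _; apply: eq_bigr => t _; exact: sum_ind1.
Qed.

Lemma ind01 b s M : ind b s M * ind b s M = ind b s M.
Proof. by rewrite /ind; case: (_ == _); rewrite ?mulr0 ?mulr1. Qed.

Lemma E2 b b' M : \sum_s Ws s * (ind b s M * ind b' s M)
  = wm M ^+ 2 + (b == b')%:R * (wm M - wm M ^+ 2).
Proof.
case: (eqVneq b b') => [<-|nb].
  rewrite (eq_bigr _ (fun s _ => congr1 (fun z => Ws s * z) (ind01 b s M))) E1.
  by rewrite mul1r addrC subrK.
pose J (u : 'I_(k + k)) : 'I_n :=
  match split u with inl t => Ib b t | inr t => Ib b' t end.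
pose o (u : 'I_(k + k)) : 'I_k := match split u with inl t => t | inr t => t end.
have injJ : injective J.
  move=> u u'; rewrite /J.
  case: splitP => t Et; case: splitP => t' Et' H.
  - by apply: val_inj; rewrite /= Et Et' (Ib_inj _ _ H).
  - by move: (Ib_disj t t' nb); rewrite H eqxx.
  - by move: (Ib_disj t' t nb); rewrite H eqxx.
  - by apply: val_inj; rewrite /= Et Et' (Ib_inj _ _ H).
have := @marg R l m n a sa (k + k) J injJ (fun j u x => (x == M j (o u))%:R).
move=> /= E.
have E' : forall s, Ws s * (ind b s M * ind b' s M) =
   Ws s * \prod_j \prod_u (s j (J u) == M j (o u))%:R.
  move=> s; congr (_ * _); rewrite !ind_prod -big_split /=; apply: eq_bigr => j _.
  by rewrite big_split_ord /= /J /o; congr (_ * _); apply: eq_bigr => t _;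
     rewrite ?split_l ?split_r.
rewrite (eq_bigr _ (fun s _ => E' s)) E mul0r addr0 expr2 /wM -big_split /=.
apply: eq_bigr => j _; rewrite big_split_ord /= /o.
congr (_ * _); apply: eq_bigr => t _; rewrite ?split_l ?split_r; exact: sum_ind1.
Qed.

Definition XX s M := \sum_(b < B) ind b s M - B%:R * wm M.

Lemma EX2 M : \sum_s Ws s * XX s M ^+ 2 <= B%:R * wm M.
Proof.
set w := wm M.
have EY : forall s, XX s M = \sum_(b < B) (ind b s M - w).
  move=> s; rewrite /XX sumrB sumr_const card_ord mulr_natl.
  by [].
have EC : forall b b' : 'I_B, \sum_s Ws s * ((ind b s M - w) * (ind b' s M - w))
    = (b == b')%:R * (w - w ^+ 2).
  move=> b b'.
  rewrite (eq_bigr (fun s => Ws s * (ind b s M * ind b' s M) - w * (Ws s * ind b s M)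
         - w * (Ws s * ind b' s M) + w ^+ 2 * Ws s)); last first.
    by move=> s _; rewrite expr2; ring.
  rewrite !big_split /= !sumrN -!mulr_sumr E2 !E1 sumW /w; ring.
rewrite (eq_bigr (fun s => \sum_(b < B) \sum_(b' < B) Ws s * ((ind b s M - w) * (ind b' s M - w))));
  last first.
  move=> s _; rewrite EY expr2 mulr_suml mulr_sumr; apply: eq_bigr => b _.
  by rewrite mulr_sumr mulr_sumr; apply: eq_bigr => b' _; rewrite mulrA.
rewrite exchange_big /=.
rewrite (eq_bigr (fun b => w - w ^+ 2)); last first.
  move=> b _; rewrite exchange_big /= (eq_bigr _ (fun b' _ => EC b b')).
  rewrite (bigD1 b) //= eqxx mul1r big1 ?addr0 // => b' nb.
  by rewrite eq_sym (negbTE nb) mul0r.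
rewrite sumr_const card_ord -[X in X <= _]mulr_natl.
apply: ler_wpM2l => //; rewrite lerBlDr lerDl; exact: sqr_ge0.
Qed.

Lemma aux_ineq (X h1 h2 : R) : 0 <= h1 <= 1 -> 0 <= h2 <= 1 -> X * (h1 - h2) <= X ^+ 2 / 8 + 2.
Proof.
move=> /andP[a1 b1] /andP[a2 b2].
have s1 : 0 <= (X - 4 * (h1 - h2)) ^+ 2 by apply: sqr_ge0.
have s2 : 0 <= (1 - (h1 - h2)) * (1 + (h1 - h2)) by apply: mulr_ge0; lra.
nra.
Qed.

Lemma main_bound : (B <= 10 * l ^ (k * m))%N.
Proof.
case: hd => hp hq.
have H1 : forall b : 'I_B, 1/3 <= accept_prob v a (junta p (Ib b)) A - accept_prob v a (junta q (Ib b)) A.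
  move=> b; have h1 := hp _ (@Ib_inj n k b); have h2 := hq _ (@Ib_inj n k b); lra.
have H2 : B%:R / 3 <= \sum_(b < B) (accept_prob v a (junta p (Ib b)) A - accept_prob v a (junta q (Ib b)) A).
  apply: le_trans (ler_sum _ (fun b _ => H1 b)).
  rewrite sumr_const card_ord -[X in _ <= X]mulr_natl; lra.
have H3 : \sum_(b < B) (accept_prob v a (junta p (Ib b)) A - accept_prob v a (junta q (Ib b)) A)
    = \sum_s Ws s * \sum_M XX s M * hh s M.
  rewrite (eq_bigr (fun b => \sum_s Ws s * hh s (Mb b s))); last first.
    by move=> b _; rewrite !acc_eq -sumrB; apply: eq_bigr => s _; rewrite /hh mulrBr.
  rewrite exchange_big /=; apply: eq_bigr => s _; rewrite -mulr_sumr; congr (_ * _).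
  have -> : \sum_(b < B) hh s (Mb b s) = \sum_M (\sum_(b < B) ind b s M) * hh s M.
    rewrite (eq_bigr (fun b => \sum_M ind b s M * hh s M)).
      by rewrite exchange_big /=; apply: eq_bigr => M _; rewrite mulr_suml.
    move=> b _; rewrite (bigD1 (Mb b s)) //= /ind eqxx mul1r big1 ?addr0 // => M nM.
    by rewrite eq_sym (negbTE nM) mul0r.
  have P0 : \sum_M wm M * hh s M = 0.
    rewrite /hh (eq_bigr (fun M => wm M * Hs s (FV p M) - wm M * Hs s (FV q M))); last first.
      by move=> M _; rewrite mulrBr.
    by rewrite sumrB (@pushforward R l k m v a p q sl (Hs s)) subrr.
  rewrite (eq_bigr (fun M => XX s M * hh s M + B%:R * (wm M * hh s M))); last first.
    by move=> M _; rewrite /XX; ring.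
  by rewrite big_split /= -mulr_sumr P0 mulr0 addr0.
have H4 : \sum_s Ws s * \sum_M XX s M * hh s M <= \sum_(M : MT) ((\sum_s Ws s * XX s M ^+ 2) / 8 + 2).
  apply: (le_trans (y := \sum_s Ws s * \sum_(M : MT) (XX s M ^+ 2 / 8 + 2))).
    apply: ler_sum => s _; apply: ler_wpM2l; first exact: W_ge0. apply: ler_sum => M _.
    by apply: aux_ineq; apply: hA.
  rewrite (eq_bigr (fun s => \sum_(M : MT) (Ws s * XX s M ^+ 2 / 8 + 2 * Ws s))); last first.
    by move=> s _; rewrite mulr_sumr; apply: eq_bigr => M _; ring.
  rewrite exchange_big /= le_eqVlt; apply/orP; left; apply/eqP; apply: eq_bigr => M _.
  by rewrite big_split /= -mulr_suml -mulr_sumr sumW mulr1.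
have H5 : \sum_(M : MT) ((\sum_s Ws s * XX s M ^+ 2) / 8 + 2) <= B%:R / 8 + 2 * #|MT|%:R.
  apply: (le_trans (y := \sum_(M : MT) (B%:R * wm M / 8 + 2))).
    by apply: ler_sum => M _; have := EX2 M; lra.
  rewrite big_split /= -mulr_suml -mulr_sumr sumwM sumr_const -[2 *+ _]mulr_natr; lra.
have card : #|MT| = (l ^ (k * m))%N by rewrite !card_ffun !card_ord expnM.
have : (B%:R : R) <= 10 * (l ^ (k * m))%:R.
  rewrite -card. have h0 : (0:R) <= #|MT|%:R by apply: ler0n.
  rewrite H3 in H2. have H6 := le_trans H2 (le_trans H4 H5). lra.
by rewrite -natrM ler_nat.
Qed.
End Main.
Theorem theorem8p1 (R : realType) (k l : nat) (alpha : R) :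
  exists c : R, 0 < c /\ exists N : nat,
  forall (v : 'I_l -> R) (a : 'I_l -> R),
    injective v ->
    (forall i, 0 < a i) ->
    \sum_(i < l) a i = 1 ->
    (forall i, alpha <= a i) -> (exists i, a i = alpha) ->
  forall p q : ('I_k -> R) -> R,
    same_law v a p q ->
  forall (n m : nat) (A : algorithm R n m),
    (N <= n)%N ->
    (forall xs, 0 <= A xs <= 1) ->
    distinguishes v a p q A ->
    c * ln (n%:R) <= m%:R.
Proof.
set K : R := k%:R * ln (l%:R).
set C := (11 * k.+1)%N.
exists (2 * K + 2)^-1.
have K0 : 0 <= K.
  rewrite /K; apply: mulr_ge0 => //; case: (posnP l) => [->|lpos]; first by rewrite ln0.
  by apply: ln_ge0; rewrite ler1n.
have d0 : 0 < 2 * K + 2 by lra.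
split; first by rewrite invr_gt0.
exists (C ^ 2)%N => v a _ apos sa _ _ p q sl n m A hN hA hd.
have hB := @main_bound R k l n m v a p q A apos sa sl hA hd.
have l0 : (0 < l)%N.
  case: (posnP l) => // l0; move: sa; rewrite big1; last by move=> [i hi]; exfalso; move: hi; rewrite l0.
  by move/eqP; rewrite eq_sym oner_eq0.
have C0 : (0 < C)%N by rewrite /C.
have hn : (n <= C * l ^ (k * m))%N.
  have e1 := leq_trunc_div n k.+1.
  have e2 : (n < (n %/ k.+1).+1 * k.+1)%N by exact: (ltn_ceil n (ltn0Sn k)).
  have e3 : (0 < l ^ (k * m))%N by rewrite expn_gt0 l0.
  rewrite /C; nia.
have n0 : (0 < n)%N by apply: leq_trans hN; rewrite expn_gt0 C0.
have lnn : ln (n%:R : R) <= ln (C%:R) + (k * m)%:R * ln (l%:R).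
  rewrite [X in _ <= _ + X]mulr_natl -lnXn ?ltr0n // -lnM ?posrE ?ltr0n ?exprn_gt0 //.
  rewrite ler_ln ?posrE ?ltr0n ?exprn_gt0 ?mulr_gt0 ?ltr0n //; first by rewrite -natrX -natrM ler_nat.
  1,2: try apply: exprn_gt0; by rewrite ltr0n.
have lnN : ln (C%:R) *+ 2 <= ln (n%:R : R).
  rewrite -lnXn ?ltr0n // ler_ln ?posrE ?ltr0n ?exprn_gt0 // -natrX ler_nat.
  exact: hN.
have lnC : 0 <= ln (C%:R : R) by apply: ln_ge0; rewrite ler1n.
rewrite mulrC ler_pdivrMr //.
have : ln (n%:R : R) <= 2 * (m%:R * K).
  rewrite /K natrM in lnn; rewrite -[ln _ *+ 2]mulr_natl in lnN. rewrite /K.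
  have -> : 2 * (m%:R * (k%:R * ln (l%:R : R))) = 2 * (k%:R * m%:R * ln (l%:R : R)) by ring.
  lra.
have m0 : (0 : R) <= m%:R by [].
have := mulr_ge0 m0 K0.
move=> h1 h2.
have -> : m%:R * (2 * K + 2) = 2 * (m%:R * K) + 2 * m%:R by ring.
lra.
Qed.
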